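(* Let $L$ be a positive integer and let $a,b,s$ be integers with $a\mid L$, $b\mid L$, $0\le s<b$ and $s\in\frac{ab}{\gcd(ab,L)}\mathbb{Z}$. Let $k_1,k_2\in\mathbb{Z}$ satisfy $k_1s+k_2b=\gcd(b,s)$, and set $\tilde b=\gcd(b,s)$, $\tilde a=ab/\gcd(b,s)$, $\tilde s=k_1a$. Then $$\begin{pmatrix} a & 0\\ s & b\end{pmatrix}\mathbb{Z}_L^2=\begin{pmatrix} \tilde a & \tilde s\\ 0 & \tilde b\end{pmatrix}\mathbb{Z}_L^2 .$$
   Context: $\mathbb{Z}_L=\mathbb{Z}/L\mathbb{Z}$; for an integer matrix $A$, $A\mathbb{Z}_L^2=\{Az\bmod L: z\in\mathbb{Z}_L^2\}$. Here $\gcd(b,0)=b$. *)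

(* Defs.v *)
From HB Require Import structures.
From mathcomp Require Import all_boot all_order all_algebra.
Set Implicit Arguments. Unset Strict Implicit. Unset Printing Implicit Defensive.
Import Order.TTheory GRing.Theory Num.Theory.
Local Open Scope ring_scope.

Definition mx2 (p q r t : int) : 'M[int]_2 :=
  \matrix_(i < 2, j < 2)
    if (i : nat) == 0%N then (if (j : nat) == 0%N then p else q)
    else (if (j : nat) == 0%N then r else t).

Definition modL (L : int) (v : 'cV[int]_2) : 'cV[int]_2 :=
  map_mx (fun x => (x %% L)%Z) v.

(* A Z_L^2 = { A z mod L : z in Z_L^2 }, with elements of Z_L represented by
   their least non-negative residues.  Letting z range over Z^2 gives the same
   set, since A z mod L only depends on z mod L. *)
Definition mx_image (L : int) (A : 'M[int]_2) : 'cV[int]_2 -> Prop :=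
  fun v => exists z : 'cV[int]_2, v = modL L (A *m z).

(* Main.v *)
Require Import Defs.
From HB Require Import structures.
From mathcomp Require Import all_boot all_order all_algebra.
From mathcomp Require Import ring.
Import Order.TTheory GRing.Theory Num.Theory.
Local Open Scope ring_scope.

Lemma mx2E p q r t (z : 'cV[int]_2) i :
  (mx2 p q r t *m z) i ord0 =
  if (i : nat) == 0%N then p * z ord0 ord0 + q * z ord_max ord0
  else r * z ord0 ord0 + t * z ord_max ord0.
Proof.
rewrite mxE big_ord_recr big_ord_recr big_ord0 /= !mxE add0r.
have E : widen_ord (leqnSn 1) (@ord_max 0) = ord0 :> 'I_2 by apply: val_inj.
rewrite E; case: i => [[|[|//]]] Hi //=.
Qed.

Lemma colE (e0 e1 : int) i :
  (\col_(k < 2) (if (k : nat) == 0%N then e0 else e1)) i ord0 =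
  if (i : nat) == 0%N then e0 else e1.
Proof. by rewrite mxE. Qed.

Lemma mx_eq (M1 M2 : 'M[int]_2) z w :
  (forall i, (M1 *m z) i (@ord0 0) = (M2 *m w) i (@ord0 0)) -> M1 *m z = M2 *m w.
Proof. by move=> H; apply/matrixP => i j; rewrite (ord1 j). Qed.

Theorem proposition2p2 (L : nat) (a b s k1 k2 : int) :
  (0 < L)%N ->
  (a %| L%:Z)%Z -> (b %| L%:Z)%Z ->
  0 <= s -> s < b ->
  (divz (a * b) (gcdz (a * b) L%:Z) %| s)%Z ->
  k1 * s + k2 * b = gcdz b s ->
  forall v : 'cV[int]_2,
    mx_image L%:Z (mx2 a 0 s b) v <->
    mx_image L%:Z (mx2 (divz (a * b) (gcdz b s)) (k1 * a) 0 (gcdz b s)) v.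
Proof.
move=> _ _ _ s0 sb _ Hk v.
have gnz : gcdz b s != 0.
  by rewrite gcdz_eq0 negb_and; apply/orP; left; rewrite gt_eqF // (le_lt_trans s0 sb).
move: (dvdz_gcdl b s) (dvdz_gcdr b s) Hk gnz.
set g := gcdz b s.
move=> /dvdzP [b' ->] /dvdzP [s' ->] Hk gnz.
have Hk' : k1 * s' + k2 * b' = 1.
  apply: (mulIf gnz); rewrite mul1r -[in RHS]Hk; ring.
have -> : divz (a * (b' * g)) g = a * b' by rewrite mulrA mulzK.
split => -[z ->].
- exists (\col_(k < 2) (if (k : nat) == 0%N then k2 * z ord0 ord0 - k1 * z ord_max ord0
                       else s' * z ord0 ord0 + b' * z ord_max ord0)).
  congr modL; apply: mx_eq => i; rewrite !mx2E !colE /=.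
  case: ifP => _.
  + apply/eqP; rewrite -subr_eq0; apply/eqP.
    transitivity (- a * z ord0 ord0 * (k1 * s' + k2 * b' - 1)); first ring.
    by rewrite Hk' subrr mulr0.
  + ring.
- exists (\col_(k < 2) (if (k : nat) == 0%N then b' * z ord0 ord0 + k1 * z ord_max ord0
                       else k2 * z ord_max ord0 - s' * z ord0 ord0)).
  congr modL; apply: mx_eq => i; rewrite !mx2E !colE /=.
  case: ifP => _.
  + ring.
  + apply/eqP; rewrite -subr_eq0; apply/eqP.
    transitivity (- g * z ord_max ord0 * (k1 * s' + k2 * b' - 1)); first ring.
    by rewrite Hk' subrr mulr0.
Qed.
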